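(* Let $Y_1,\dots,Y_m$ be independent $\mathbb{Z}^d$-valued random vectors, $W:=\sum_{i=1}^mY_i$, $u_i:=\min_{1\le j\le d}\{1-d_{TV}(\mathcal{L}(Y_i),\mathcal{L}(Y_i+e^{(j)}))\}$ and $s_m:=\sum_{i=1}^mu_i>0$. Then there is a universal constant $C$ such that $\max_{1\le j\le d}d_{TV}(\mathcal{L}(W),\mathcal{L}(W+e^{(j)}))\le C\,s_m^{-1/2}$.
   Context: $e^{(j)}$ is the $j$-th coordinate vector of $\mathbb{Z}^d$; $d_{TV}$ is total variation distance. *)

(* Defs.v *)
From Stdlib Require Import Reals List ZArith Lra ClassicalEpsilon.
Open Scope R_scope.

(* Points of Z^d are lists of integers of length d.  A law (probability
   distribution) on Z^d is a probability mass function p : list Z -> R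
   (only its values at points of length d matter). *)

Definition inZd (d : nat) (x : list Z) : Prop := length x = d.

Definition fsum (f : list Z -> R) (l : list (list Z)) : R :=
  fold_right (fun x a => f x + a) 0 l.

Definition nn_sum (d : nat) (f : list Z -> R) (S : R) : Prop :=
  is_lub (fun r => exists l, NoDup l /\ Forall (inZd d) l /\ r = fsum f l) S.

Definition is_pmf (d : nat) (p : list Z -> R) : Prop :=
  (forall x, 0 <= p x) /\ nn_sum d p 1.

Definition vadd (x y : list Z) : list Z :=
  map (fun ab => (fst ab + snd ab)%Z) (combine x y).
Definition vsub (x y : list Z) : list Z :=
  map (fun ab => (fst ab - snd ab)%Z) (combine x y).

(* j-th coordinate vector e^(j) of Z^d, j = 0, ..., d-1 *)
Definition evec (d j : nat) : list Z :=
  map (fun k => if Nat.eqb k j then 1%Z else 0%Z) (seq 0 d).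

(* law of Y + v, when p is the law of Y *)
Definition law_shift (p : list Z -> R) (v : list Z) : list Z -> R :=
  fun x => p (vsub x v).

Definition choose_R (P : R -> Prop) : R := epsilon (inhabits 0) P.

(* law of the sum of two independent random vectors: convolution *)
Definition conv (d : nat) (p q : list Z -> R) : list Z -> R :=
  fun x => choose_R (nn_sum d (fun y => p y * q (vsub x y))).

Definition delta0 (d : nat) : list Z -> R :=
  fun x => if list_eq_dec Z.eq_dec x (repeat 0%Z d) then 1 else 0.

(* law of Y_1 + ... + Y_m for independent Y_i with laws ps *)
Definition sum_law (d : nat) (ps : list (list Z -> R)) : list Z -> R :=
  fold_right (conv d) (delta0 d) ps.

Definition dTV (d : nat) (p q : list Z -> R) : R :=
  choose_R (fun t => nn_sum d (fun x => Rabs (p x - q x)) (2 * t)).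

Definition min_coord (d : nat) (f : nat -> R) : R :=
  fold_right (fun j a => Rmin (f j) a) (f 0%nat) (seq 1 (d - 1)).

Definition u_coef (d : nat) (p : list Z -> R) : R :=
  min_coord d (fun j => 1 - dTV d p (law_shift p (evec d j))).

Definition s_coef (d : nat) (ps : list (list Z -> R)) : R :=
  fold_right (fun p a => u_coef d p + a) 0 ps.

(* Main.v *)
Require Import Defs.
From Stdlib Require Import Reals List ZArith Lra Lia Psatz ClassicalEpsilon Permutation.
Open Scope R_scope.

Lemma fsum_cons f x l : fsum f (x::l) = f x + fsum f l.
Proof. reflexivity. Qed.

Lemma fsum_app f l1 l2 : fsum f (l1++l2) = fsum f l1 + fsum f l2.
Proof. induction l1; simpl; [lra|]. unfold fsum in *; simpl. rewrite IHl1. lra. Qed.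

Lemma fsum_ext f g l : (forall x, In x l -> f x = g x) -> fsum f l = fsum g l.
Proof. induction l; simpl; intros H; auto. unfold fsum in *; simpl.
  rewrite H by auto. rewrite IHl; auto. Qed.

Lemma fsum_le f g l : (forall x, In x l -> f x <= g x) -> fsum f l <= fsum g l.
Proof. induction l; simpl; intros H; unfold fsum in *; simpl; [lra|].
  assert (f a <= g a) by auto. assert (fold_right (fun x a => f x + a) 0 l <= fold_right (fun x a => g x + a) 0 l) by auto. lra. Qed.

Lemma fsum_nonneg f l : (forall x, In x l -> 0 <= f x) -> 0 <= fsum f l.
Proof. intros H. assert (fsum (fun _ => 0) l = 0).
  { clear H. induction l; unfold fsum in *; simpl; auto. rewrite IHl; lra. }
  rewrite <- H0. apply fsum_le. auto. Qed.

Lemma fsum_plus f g l : fsum (fun x => f x + g x) l = fsum f l + fsum g l.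
Proof. induction l; unfold fsum in *; simpl; [lra|]. rewrite IHl. lra. Qed.

Lemma fsum_scal c f l : fsum (fun x => c * f x) l = c * fsum f l.
Proof. induction l; unfold fsum in *; simpl; [lra|]. rewrite IHl. lra. Qed.

Lemma fsum_map f g l : fsum f (map g l) = fsum (fun x => f (g x)) l.
Proof. induction l; unfold fsum in *; simpl; [lra|]. rewrite IHl. lra. Qed.

Lemma fsum_abs f l : Rabs (fsum f l) <= fsum (fun x => Rabs (f x)) l.
Proof. induction l; unfold fsum in *; simpl. rewrite Rabs_R0; lra.
  eapply Rle_trans. apply Rabs_triang. lra. Qed.

Lemma fsum_perm f l1 l2 : Permutation l1 l2 -> fsum f l1 = fsum f l2.
Proof. induction 1; unfold fsum in *; simpl; lra. Qed.

Lemma fsum_incl f l1 l2 : NoDup l1 -> incl l1 l2 -> (forall x, In x l2 -> 0 <= f x) ->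
  fsum f l1 <= fsum f l2.
Proof.
  revert l2; induction l1 as [|a l1 IH]; intros l2 Hnd Hi Hf.
  - simpl. apply fsum_nonneg; auto.
  - inversion Hnd; subst.
    assert (Ha : In a l2) by (apply Hi; simpl; auto).
    destruct (in_split _ _ Ha) as [L1 [L2 E]]. subst l2.
    rewrite (fsum_perm f (L1 ++ a :: L2) (a :: L1 ++ L2)).
    2:{ symmetry. apply Permutation_middle. }
    rewrite !fsum_cons. apply Rplus_le_compat_l. apply IH; auto.
    + intros y Hy. assert (In y (L1 ++ a :: L2)) by (apply Hi; simpl; auto).
      apply in_app_or in H. apply in_or_app. destruct H as [H|H]; auto.
      simpl in H; destruct H; subst; [contradiction|auto].
    + intros y Hy. apply Hf. apply in_app_or in Hy; apply in_or_app; simpl; tauto.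
Qed.

Lemma NoDup_map_on {A B} (g : A -> B) l : NoDup l ->
  (forall x y, In x l -> In y l -> g x = g y -> x = y) -> NoDup (map g l).
Proof. induction 1 as [|a l Ha Hl IH]; intros Hi; simpl; constructor.
  - intro Hin. apply in_map_iff in Hin. destruct Hin as [y [E Hy]].
    assert (y = a) by (apply Hi; simpl; auto). subst; contradiction.
  - apply IH. intros; apply Hi; simpl; auto. Qed.

Definition nng d (f : list Z -> R) := forall x, inZd d x -> 0 <= f x.
Definition bnd d (f : list Z -> R) M := forall l, NoDup l -> Forall (inZd d) l -> fsum f l <= M.
Definition summ d f := nng d f /\ exists M, bnd d f M.
Definition nnS d f := choose_R (nn_sum d f).

Lemma nn_sum_exists d f : summ d f -> exists S, nn_sum d f S.
Proof. intros [Hn [M HM]].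
  destruct (completeness (fun r => exists l, NoDup l /\ Forall (inZd d) l /\ r = fsum f l)) as [m Hm].
  - exists M. intros r [l [H1 [H2 ->]]]. apply HM; auto.
  - exists 0. exists nil. repeat split; auto. constructor.
  - exists m; exact Hm.
Qed.

Lemma nnS_spec d f : summ d f -> nn_sum d f (nnS d f).
Proof. intros H. unfold nnS, choose_R. apply epsilon_spec. apply nn_sum_exists; auto. Qed.

Lemma nnS_eq d f S : nn_sum d f S -> nnS d f = S.
Proof. intros H. unfold nnS, choose_R. apply (is_lub_u _ _ _ (epsilon_spec (inhabits 0) (nn_sum d f) (ex_intro _ S H)) H). Qed.

Lemma nnS_ge d f l : summ d f -> NoDup l -> Forall (inZd d) l -> fsum f l <= nnS d f.
Proof. intros H H1 H2. destruct (nnS_spec d f H) as [Hub _]. apply Hub. exists l; auto. Qed.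

Lemma nnS_le d f M : summ d f -> bnd d f M -> nnS d f <= M.
Proof. intros H HM. destruct (nnS_spec d f H) as [_ Hl]. apply Hl.
  intros r [l [H1 [H2 ->]]]; apply HM; auto. Qed.

Lemma nnS_nonneg d f : summ d f -> 0 <= nnS d f.
Proof. intros H. change 0 with (fsum f nil). apply nnS_ge; auto. constructor. Qed.

Lemma Forall_In {A} (P : A -> Prop) l x : Forall P l -> In x l -> P x.
Proof. rewrite Forall_forall; auto. Qed.

Lemma summ_le d f g : nng d f -> (forall x, inZd d x -> f x <= g x) -> summ d g ->
  summ d f /\ nnS d f <= nnS d g.
Proof. intros Hf Hle Hg.
  assert (B : bnd d f (nnS d g)).
  { intros l H1 H2. eapply Rle_trans; [|apply nnS_ge; eauto].
    apply fsum_le. intros; apply Hle. eapply Forall_In; eauto. }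
  assert (summ d f) by (split; eauto). split; auto. apply nnS_le; auto. Qed.

Lemma summ_ext d f g : (forall x, inZd d x -> g x = f x) -> summ d f ->
  summ d g /\ nnS d g = nnS d f.
Proof. intros E Hf.
  assert (Hn : nng d g) by (intros x Hx; rewrite E; auto; apply Hf; auto).
  assert (A1 : forall x, inZd d x -> g x <= f x) by (intros; rewrite E; auto; lra).
  destruct (summ_le d g f Hn A1 Hf) as [Hg L1].
  assert (A2 : forall x, inZd d x -> f x <= g x) by (intros; rewrite E; auto; lra).
  destruct (summ_le d f g (proj1 Hf) A2 Hg) as [_ L2].
  split; auto. lra. Qed.

Definition unionl (l1 l2 : list (list Z)) := nodup (list_eq_dec Z.eq_dec) (l1 ++ l2).

Lemma summ_plus d f g k : summ d f -> summ d g -> (forall x, inZd d x -> k x = f x + g x) ->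
  summ d k /\ nnS d k = nnS d f + nnS d g.
Proof. intros Hf Hg E.
  assert (Hk : summ d k).
  { split. intros x Hx; rewrite E; auto. pose proof (proj1 Hf x Hx); pose proof (proj1 Hg x Hx); lra.
    exists (nnS d f + nnS d g). intros l H1 H2. rewrite (fsum_ext _ (fun x => f x + g x)).
    rewrite fsum_plus. pose proof (nnS_ge d f l Hf H1 H2); pose proof (nnS_ge d g l Hg H1 H2); lra.
    intros; apply E. eapply Forall_In; eauto. }
  split; auto. apply Rle_antisym.
  - apply nnS_le; auto. intros l H1 H2. rewrite (fsum_ext _ (fun x => f x + g x)).
    rewrite fsum_plus. pose proof (nnS_ge d f l Hf H1 H2); pose proof (nnS_ge d g l Hg H1 H2); lra.
    intros; apply E. eapply Forall_In; eauto.
  - cut (nnS d f <= nnS d k - nnS d g). lra.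
    apply nnS_le; auto. intros l1 H11 H12.
    cut (nnS d g <= nnS d k - fsum f l1). lra.
    apply nnS_le; auto. intros l2 H21 H22.
    set (L := unionl l1 l2).
    assert (HL1 : NoDup L) by apply NoDup_nodup.
    assert (HLi : forall x, In x L <-> In x l1 \/ In x l2).
    { intros x. unfold L, unionl. rewrite nodup_In. split; [apply in_app_or|apply in_or_app]. }
    assert (HL2 : Forall (inZd d) L).
    { apply Forall_forall. intros x Hx. apply HLi in Hx. destruct Hx as [Hx|Hx]; [exact (Forall_In _ _ _ H12 Hx)|exact (Forall_In _ _ _ H22 Hx)]. }
    assert (Z1 : forall x, In x L -> inZd d x) by (intros x Hx; exact (Forall_In _ _ _ HL2 Hx)).
    assert (fsum f l1 <= fsum f L).
    { apply fsum_incl; auto. intros x Hx; apply HLi; auto. intros; apply Hf; auto. }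
    assert (fsum g l2 <= fsum g L).
    { apply fsum_incl; auto. intros x Hx; apply HLi; auto. intros; apply Hg; auto. }
    assert (fsum k L <= nnS d k) by (apply nnS_ge; auto).
    rewrite (fsum_ext k (fun x => f x + g x)) in H1 by auto. rewrite fsum_plus in H1. lra.
Qed.

Lemma summ_scal d c f k : 0 <= c -> summ d f -> (forall x, inZd d x -> k x = c * f x) ->
  summ d k /\ nnS d k = c * nnS d f.
Proof. intros Hc Hf E.
  assert (Hk : summ d k).
  { split. intros x Hx; rewrite E; auto. pose proof (proj1 Hf x Hx); nra.
    exists (c * nnS d f). intros l H1 H2. rewrite (fsum_ext _ (fun x => c * f x)).
    rewrite fsum_scal. pose proof (nnS_ge d f l Hf H1 H2); nra.
    intros; apply E. eapply Forall_In; eauto. }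
  split; auto. apply Rle_antisym.
  - apply nnS_le; auto. intros l H1 H2. rewrite (fsum_ext _ (fun x => c * f x)).
    rewrite fsum_scal. pose proof (nnS_ge d f l Hf H1 H2); nra.
    intros; apply E. eapply Forall_In; eauto.
  - destruct (Req_dec c 0) as [->|Hc0]. rewrite Rmult_0_l; apply nnS_nonneg; auto.
    cut (nnS d f <= nnS d k / c).
    { intros H. apply (Rmult_le_compat_l c) in H; [|lra].
      replace (c * (nnS d k / c)) with (nnS d k) in H by (field; auto). lra. }
    apply nnS_le; auto. intros l H1 H2.
    pose proof (nnS_ge d k l Hk H1 H2).
    rewrite (fsum_ext k (fun x => c * f x)) in H by (intros; apply E; eapply Forall_In; eauto).
    rewrite fsum_scal in H. apply Rmult_le_reg_l with c. lra.
    replace (c * (nnS d k / c)) with (nnS d k) by (field; auto). lra.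
Qed.

Lemma summ_zero d k : (forall x, inZd d x -> k x = 0) -> summ d k /\ nnS d k = 0.
Proof. intros E.
  assert (B : bnd d k 0).
  { intros l H1 H2. rewrite (fsum_ext k (fun _ => 0)). clear. induction l; unfold fsum in *; simpl; lra.
    intros; apply E; eapply Forall_In; eauto. }
  assert (summ d k) by (split; [intros x Hx; rewrite E; auto; lra| eauto]).
  split; auto. apply Rle_antisym. apply nnS_le; auto. apply nnS_nonneg; auto. Qed.

Lemma summ_bij d f (tau tau' : list Z -> list Z) :
  summ d f ->
  (forall x, inZd d x -> inZd d (tau x)) -> (forall x, inZd d x -> inZd d (tau' x)) ->
  (forall x, inZd d x -> tau' (tau x) = x) -> (forall x, inZd d x -> tau (tau' x) = x) ->
  summ d (fun x => f (tau x)) /\ nnS d (fun x => f (tau x)) = nnS d f.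
Proof. intros Hf T1 T2 E1 E2.
  assert (Hn : forall l, NoDup l -> Forall (inZd d) l -> NoDup (map tau l) /\ Forall (inZd d) (map tau l)).
  { intros l H1 H2. split. apply NoDup_map_on; auto. intros x y Hx Hy E.
    rewrite <- (E1 x), <- (E1 y), E; auto; eapply Forall_In; eauto.
    apply Forall_forall. intros y Hy. apply in_map_iff in Hy. destruct Hy as [x [<- Hx]].
    apply T1. eapply Forall_In; eauto. }
  assert (B : bnd d (fun x => f (tau x)) (nnS d f)).
  { intros l H1 H2. rewrite <- fsum_map. destruct (Hn l H1 H2). apply nnS_ge; auto. }
  assert (Hs : summ d (fun x => f (tau x))).
  { split; eauto. intros x Hx. apply Hf; auto. }
  split; auto. apply Rle_antisym. apply nnS_le; auto.
  apply nnS_le; auto. intros l H1 H2.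
  assert (H1' : NoDup (map tau' l)).
  { apply NoDup_map_on; auto. intros x y Hx Hy E.
    rewrite <- (E2 x), <- (E2 y), E; auto; eapply Forall_In; eauto. }
  assert (H2' : Forall (inZd d) (map tau' l)).
  { apply Forall_forall. intros y Hy. apply in_map_iff in Hy. destruct Hy as [x [<- Hx]].
    apply T2. eapply Forall_In; eauto. }
  rewrite (fsum_ext f (fun x => f (tau (tau' x)))).
  rewrite <- (fsum_map (fun x => f (tau x))). apply nnS_ge; auto.
  intros x Hx. rewrite E2; auto. exact (Forall_In _ _ _ H2 Hx).
Qed.

Fixpoint sumk (K : nat) (f : nat -> R) : R :=
  match K with O => 0 | S K' => sumk K' f + f K' end.

Lemma sumk_ext K f g : (forall k, (k < K)%nat -> f k = g k) -> sumk K f = sumk K g.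
Proof. induction K; simpl; intros H; auto. rewrite IHK, H; auto. Qed.

Lemma sumk_plus K f g : sumk K (fun k => f k + g k) = sumk K f + sumk K g.
Proof. induction K; simpl; [lra|]. rewrite IHK; lra. Qed.

Lemma sumk_scal K c f : sumk K (fun k => c * f k) = c * sumk K f.
Proof. induction K; simpl; [lra|]. rewrite IHK; lra. Qed.

Lemma sumk_le K f g : (forall k, (k < K)%nat -> f k <= g k) -> sumk K f <= sumk K g.
Proof. induction K; simpl; intros H; [lra|]. assert (f K <= g K) by auto.
  assert (sumk K f <= sumk K g) by auto. lra. Qed.

Lemma sumk_abs K f : Rabs (sumk K f) <= sumk K (fun k => Rabs (f k)).
Proof. induction K; simpl. rewrite Rabs_R0; lra.
  eapply Rle_trans. apply Rabs_triang. lra. Qed.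

Lemma sumk_shift K f : sumk (S K) f = f O + sumk K (fun k => f (S k)).
Proof. induction K; simpl in *; [lra|]. rewrite IHK. lra. Qed.

Lemma sumk_nonneg K f : (forall k, (k < K)%nat -> 0 <= f k) -> 0 <= sumk K f.
Proof. induction K; simpl; intros H; [lra|]. assert (0 <= f K) by auto.
  assert (0 <= sumk K f) by auto. lra. Qed.

Lemma summ_sumk d K (c : nat -> R) (F : nat -> list Z -> R) :
  (forall k, (k < K)%nat -> 0 <= c k /\ summ d (F k)) ->
  summ d (fun y => sumk K (fun k => c k * F k y)) /\
  nnS d (fun y => sumk K (fun k => c k * F k y)) = sumk K (fun k => c k * nnS d (F k)).
Proof. induction K; intros H.
  - simpl. apply summ_zero. auto.
  - assert (IH : forall k, (k < K)%nat -> 0 <= c k /\ summ d (F k)) by (intros; apply H; lia).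
    destruct (IHK IH) as [S1 E1]. destruct (H K ltac:(lia)) as [HcK HFK].
    destruct (summ_scal d (c K) (F K) (fun y => c K * F K y) HcK HFK) as [S2 E2]; auto.
    destruct (summ_plus d _ _ (fun y => sumk (S K) (fun k => c k * F k y)) S1 S2) as [S3 E3].
    { intros; simpl; auto. }
    split; auto. rewrite E3, E1, E2. simpl. auto.
Qed.

Lemma summ_fsum d (X : list (list Z)) (G : list Z -> list Z -> R) :
  (forall x, In x X -> summ d (G x)) ->
  summ d (fun y => fsum (fun x => G x y) X) /\
  nnS d (fun y => fsum (fun x => G x y) X) = fsum (fun x => nnS d (G x)) X.
Proof. induction X as [|a X IH]; intros H.
  - apply summ_zero. auto.
  - destruct IH as [S1 E1]. intros; apply H; simpl; auto.
    destruct (summ_plus d (G a) _ (fun y => fsum (fun x => G x y) (a :: X)) (H a (or_introl eq_refl)) S1) as [S3 E3].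
    { intros; reflexivity. }
    split; auto. rewrite E3, E1. reflexivity.
Qed.

Lemma linabs d K (c : nat -> R) (F : nat -> list Z -> R) :
  (forall k, (k < K)%nat -> summ d (F k)) ->
  summ d (fun y => Rabs (sumk K (fun k => c k * F k y))) /\
  Rabs (sumk K (fun k => c k * nnS d (F k))) <= nnS d (fun y => Rabs (sumk K (fun k => c k * F k y))).
Proof. intros HF.
  set (cp := fun k => Rmax (c k) 0). set (cn := fun k => Rmax (- c k) 0).
  assert (Ec : forall k, c k = cp k - cn k).
  { intros k; unfold cp, cn, Rmax. destruct (Rle_dec (c k) 0); destruct (Rle_dec (- c k) 0); lra. }
  assert (Hp : forall k, 0 <= cp k) by (intros; unfold cp; apply Rmax_r).
  assert (Hn : forall k, 0 <= cn k) by (intros; unfold cn; apply Rmax_r).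
  destruct (summ_sumk d K cp F) as [SP EP]. intros; split; auto.
  destruct (summ_sumk d K cn F) as [SN EN]. intros; split; auto.
  set (P := fun y => sumk K (fun k => cp k * F k y)) in *.
  set (N := fun y => sumk K (fun k => cn k * F k y)) in *.
  assert (Ey : forall y, sumk K (fun k => c k * F k y) = P y - N y).
  { intros y. unfold P, N.
    replace (sumk K (fun k => cp k * F k y) - sumk K (fun k => cn k * F k y))
      with (sumk K (fun k => cp k * F k y) + (-1) * sumk K (fun k => cn k * F k y)) by ring.
    rewrite <- sumk_scal, <- sumk_plus. apply sumk_ext. intros; rewrite Ec; ring. }
  assert (Es : sumk K (fun k => c k * nnS d (F k)) = nnS d P - nnS d N).
  { rewrite EP, EN.
    replace (sumk K (fun k => cp k * nnS d (F k)) - sumk K (fun k => cn k * nnS d (F k)))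
      with (sumk K (fun k => cp k * nnS d (F k)) + (-1) * sumk K (fun k => cn k * nnS d (F k))) by ring.
    rewrite <- sumk_scal, <- sumk_plus. apply sumk_ext. intros; rewrite Ec; ring. }
  destruct (summ_plus d P N (fun y => P y + N y) SP SN) as [SPN _]. intros; auto.
  assert (SA : summ d (fun y => Rabs (sumk K (fun k => c k * F k y)))).
  { apply (summ_le d _ (fun y => P y + N y)); auto.
    intros x _; apply Rabs_pos.
    intros x Hx. rewrite Ey. pose proof (proj1 SP x Hx); pose proof (proj1 SN x Hx).
    unfold Rabs; destruct (Rcase_abs (P x - N x)); lra. }
  split; auto.
  destruct (summ_plus d N _ (fun y => N y + Rabs (sumk K (fun k => c k * F k y))) SN SA) as [S1 E1]. intros; auto.
  destruct (summ_plus d P _ (fun y => P y + Rabs (sumk K (fun k => c k * F k y))) SP SA) as [S2 E2]. intros; auto.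
  destruct (summ_le d P (fun y => N y + Rabs (sumk K (fun k => c k * F k y))) (proj1 SP)) with (2 := S1) as [_ L1].
  { intros x Hx. rewrite Ey. unfold Rabs; destruct (Rcase_abs (P x - N x)); lra. }
  destruct (summ_le d N (fun y => P y + Rabs (sumk K (fun k => c k * F k y))) (proj1 SN)) with (2 := S2) as [_ L2].
  { intros x Hx. rewrite Ey. unfold Rabs; destruct (Rcase_abs (P x - N x)); lra. }
  rewrite Es. apply Rabs_le. lra.
Qed.

Lemma fubini d (g : list Z -> list Z -> R) :
  (forall x y, inZd d x -> inZd d y -> 0 <= g x y) ->
  (forall y, inZd d y -> summ d (fun x => g x y)) ->
  summ d (fun y => nnS d (fun x => g x y)) ->
  summ d (fun x => nnS d (fun y => g x y)) /\
  nnS d (fun x => nnS d (fun y => g x y)) <= nnS d (fun y => nnS d (fun x => g x y)).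
Proof. intros Hg Hy HT.
  set (T := fun y => nnS d (fun x => g x y)) in *.
  assert (Hx : forall x, inZd d x -> summ d (fun y => g x y)).
  { intros x Hx. split. intros y Hy'; auto.
    exists (nnS d T). intros l H1 H2. eapply Rle_trans; [|apply nnS_ge; eauto].
    apply fsum_le. intros y Hyl. unfold T.
    assert (inZd d y) by exact (Forall_In _ _ _ H2 Hyl).
    replace (g x y) with (fsum (fun x => g x y) (x :: nil)) by (unfold fsum; simpl; ring).
    apply nnS_ge; auto. constructor; auto. constructor. }
  assert (B : bnd d (fun x => nnS d (fun y => g x y)) (nnS d T)).
  { intros X H1 H2.
    destruct (summ_fsum d X g) as [S1 E1]. intros x Hxx; apply Hx. exact (Forall_In _ _ _ H2 Hxx).
    change (fsum (fun x => nnS d (g x)) X <= nnS d T). rewrite <- E1. apply summ_le; auto.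
    intros y Hy'. apply fsum_nonneg. intros x Hxx; apply Hg; auto. exact (Forall_In _ _ _ H2 Hxx).
    intros y Hy'. unfold T. apply nnS_ge; auto. }
  assert (S : summ d (fun x => nnS d (fun y => g x y))).
  { split; eauto. intros x Hxx. apply nnS_nonneg; auto. }
  split; auto. apply nnS_le; auto.
Qed.

Lemma dTV_eq d p q : summ d (fun x => Rabs (p x - q x)) ->
  dTV d p q = nnS d (fun x => Rabs (p x - q x)) / 2.
Proof. intros H. unfold dTV, choose_R.
  set (P := fun t => nn_sum d (fun x => Rabs (p x - q x)) (2 * t)).
  assert (HP : P (nnS d (fun x => Rabs (p x - q x)) / 2)).
  { unfold P. replace (2 * (nnS d (fun x => Rabs (p x - q x)) / 2)) with (nnS d (fun x => Rabs (p x - q x))) by field.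
    apply nnS_spec; auto. }
  pose proof (epsilon_spec (inhabits 0) P (ex_intro _ _ HP)) as HE.
  unfold P at 1 in HE. unfold P in HP. pose proof (is_lub_u _ _ _ HE HP). lra.
Qed.

Lemma len_vsub d x y : length x = d -> length y = d -> length (vsub x y) = d.
Proof. intros; unfold vsub. rewrite length_map, length_combine; lia. Qed.
Lemma len_vadd d x y : length x = d -> length y = d -> length (vadd x y) = d.
Proof. intros; unfold vadd. rewrite length_map, length_combine; lia. Qed.

Lemma nth_vsub d x y k : length x = d -> length y = d -> (k < d)%nat ->
  nth k (vsub x y) 0%Z = (nth k x 0 - nth k y 0)%Z.
Proof. intros Hx Hy Hk. unfold vsub.
  set (F := fun ab : Z * Z => (fst ab - snd ab)%Z).
  assert (E : nth k (map F (combine x y)) 0%Z = nth k (map F (combine x y)) (F (0%Z,0%Z))).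
  { apply nth_indep. rewrite length_map, length_combine; lia. }
  rewrite E, map_nth, combine_nth by lia. reflexivity. Qed.
Lemma nth_vadd d x y k : length x = d -> length y = d -> (k < d)%nat ->
  nth k (vadd x y) 0%Z = (nth k x 0 + nth k y 0)%Z.
Proof. intros Hx Hy Hk. unfold vadd.
  set (F := fun ab : Z * Z => (fst ab + snd ab)%Z).
  assert (E : nth k (map F (combine x y)) 0%Z = nth k (map F (combine x y)) (F (0%Z,0%Z))).
  { apply nth_indep. rewrite length_map, length_combine; lia. }
  rewrite E, map_nth, combine_nth by lia. reflexivity. Qed.

Lemma vext d x y : length x = d -> length y = d ->
  (forall k, (k < d)%nat -> nth k x 0%Z = nth k y 0%Z) -> x = y.
Proof. intros Hx Hy H. apply nth_ext with 0%Z 0%Z; [lia|]. intros; apply H; lia. Qed.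

Lemma vadd_vsub d y h : length y = d -> length h = d -> vadd (vsub y h) h = y.
Proof. intros. apply (vext d); auto. apply len_vadd; auto. apply len_vsub; auto.
  intros k Hk. rewrite (nth_vadd d), (nth_vsub d); auto; try lia. apply len_vsub; auto. Qed.

Lemma vsub_vadd d w h : length w = d -> length h = d -> vsub (vadd w h) h = w.
Proof. intros. apply (vext d); auto. apply len_vsub; auto. apply len_vadd; auto.
  intros k Hk. rewrite (nth_vsub d), (nth_vadd d); auto; try lia. apply len_vadd; auto. Qed.

Lemma vsub_comm d x a b : length x = d -> length a = d -> length b = d ->
  vsub (vsub x a) b = vsub (vsub x b) a.
Proof. intros. apply (vext d); repeat (apply len_vsub; auto).
  intros k Hk. rewrite !(nth_vsub d); auto; try lia; apply len_vsub; auto. Qed.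

Lemma vsub_vadd2 d z w h : length z = d -> length w = d -> length h = d ->
  vsub z (vadd w h) = vsub (vsub z h) w.
Proof. intros. apply (vext d). apply len_vsub; auto. apply len_vadd; auto.
  repeat (apply len_vsub; auto).
  intros k Hk. rewrite !(nth_vsub d), (nth_vadd d); auto; try lia; try apply len_vsub; auto.
  apply len_vadd; auto. Qed.

Fixpoint shn (h : list Z) (k : nat) (x : list Z) : list Z :=
  match k with O => x | S k' => shn h k' (vsub x h) end.

Lemma len_shn d h k x : length h = d -> length x = d -> length (shn h k x) = d.
Proof. revert x; induction k; simpl; intros; auto. apply IHk; auto. apply len_vsub; auto. Qed.

Lemma vsub_shn d h k x y : length h = d -> length x = d -> length y = d ->
  vsub (shn h k x) y = shn h k (vsub x y).
Proof. revert x; induction k; simpl; intros; auto.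
  rewrite IHk; auto. f_equal. apply (vsub_comm d); auto. apply len_vsub; auto. Qed.

Lemma len_evec d j : length (evec d j) = d.
Proof. unfold evec. rewrite length_map, length_seq. auto. Qed.

Lemma summ_sh d h f : length h = d -> summ d f ->
  summ d (fun x => f (vsub x h)) /\ nnS d (fun x => f (vsub x h)) = nnS d f.
Proof. intros Hh Hf. apply summ_bij with (tau' := fun x => vadd x h); auto.
  intros; unfold inZd in *; apply len_vsub; auto.
  intros; unfold inZd in *; apply len_vadd; auto.
  intros; unfold inZd in *; apply (vadd_vsub d); auto.
  intros; unfold inZd in *; apply (vsub_vadd d); auto. Qed.

Lemma summ_ad d h f : length h = d -> summ d f ->
  summ d (fun x => f (vadd x h)) /\ nnS d (fun x => f (vadd x h)) = nnS d f.
Proof. intros Hh Hf. apply summ_bij with (tau' := fun x => vsub x h); auto.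
  intros; unfold inZd in *; apply len_vadd; auto.
  intros; unfold inZd in *; apply len_vsub; auto.
  intros; unfold inZd in *; apply (vsub_vadd d); auto.
  intros; unfold inZd in *; apply (vadd_vsub d); auto. Qed.

Lemma summ_shn d h k f : length h = d -> summ d f ->
  summ d (fun x => f (shn h k x)) /\ nnS d (fun x => f (shn h k x)) = nnS d f.
Proof. revert f; induction k; intros f Hh Hf; simpl.
  - split; auto.
  - destruct (IHk f Hh Hf) as [S1 E1].
    destruct (summ_sh d h _ Hh S1) as [S2 E2]. split; auto. rewrite E2; auto. Qed.

Lemma delta0_01 d x : delta0 d x = 0 \/ delta0 d x = 1.
Proof. unfold delta0. destruct (list_eq_dec Z.eq_dec x (repeat 0%Z d)); auto. Qed.

Lemma fsum_ind01 (f : list Z -> R) l : NoDup l ->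
  (forall x, In x l -> f x = 0 \/ f x = 1) ->
  (forall x y, In x l -> In y l -> f x = 1 -> f y = 1 -> x = y) -> fsum f l <= 1.
Proof. induction 1 as [|a l Ha Hl IH]; intros H01 Hu; unfold fsum in *; simpl; [lra|].
  destruct (H01 a (or_introl eq_refl)) as [E|E].
  - rewrite E. assert (fold_right (fun x a => f x + a) 0 l <= 1).
    { apply IH; intros; [apply H01|apply Hu]; simpl; auto. } lra.
  - assert (Z0 : fold_right (fun x a => f x + a) 0 l = 0).
    { clear IH. assert (forall x, In x l -> f x = 0).
      { intros x Hx. destruct (H01 x (or_intror Hx)) as [E'|E']; auto.
        assert (x = a) by (apply Hu; simpl; auto). subst; contradiction. }
      clear - H. induction l; simpl; auto. rewrite H by (simpl; auto). rewrite IHl; [lra|].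
      intros; apply H; simpl; auto. }
    rewrite Z0, E. lra.
Qed.

Lemma summ_delta0 d : summ d (delta0 d) /\ nnS d (delta0 d) <= 1.
Proof.
  assert (B : bnd d (delta0 d) 1).
  { intros l H1 H2. apply fsum_ind01; auto. intros; apply delta0_01.
    intros x y _ _. unfold delta0.
    destruct (list_eq_dec Z.eq_dec x (repeat 0%Z d)); destruct (list_eq_dec Z.eq_dec y (repeat 0%Z d)); intros; subst; auto; lra. }
  assert (summ d (delta0 d)).
  { split; eauto. intros x _; destruct (delta0_01 d x) as [E|E]; rewrite E; lra. }
  split; auto. apply nnS_le; auto. Qed.

Fixpoint bb (n k : nat) : R :=
  match n with
  | O => match k with O => 1 | _ => 0 end
  | S n' => (bb n' k + match k with O => 0 | S k' => bb n' k' end) / 2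
  end.
Definition bm n k := match k with O => 0 | S k' => bb n k' end.
Definition dd n k := bb n k - bm n k.
Definition dm n k := match k with O => 0 | S k' => dd n k' end.

Lemma dd_S n k : dd (S n) k = (dd n k + dm n k) / 2.
Proof. unfold dd, dm, bm. destruct k; simpl. lra. unfold dd, bm. destruct k; lra. Qed.

Lemma bb_big n k : (n < k)%nat -> bb n k = 0.
Proof. revert k; induction n; intros k Hk; simpl.
  - destruct k; [lia|auto].
  - destruct k; [lia|]. rewrite !IHn by lia. lra. Qed.

Lemma bb_nonneg n k : 0 <= bb n k.
Proof. revert k; induction n; intros k; simpl. destruct k; lra.
  destruct k. pose proof (IHn 0%nat); lra. pose proof (IHn (S k)); pose proof (IHn k); lra. Qed.

Lemma bb_ratio n k : INR (S k) * bb n (S k) = (INR n - INR k) * bb n k.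
Proof. revert k; induction n; intros k.
  - simpl bb. destruct k; simpl; lra.
  - change (bb (S n) (S k)) with ((bb n (S k) + bb n k) / 2).
    pose proof (IHn k) as H1. simpl bb. destruct k.
    + rewrite !S_INR in *. change (INR 0) with 0 in *. lra.
    + pose proof (IHn k). rewrite !S_INR in *. lra.
Qed.

Lemma sumk_dd n K : sumk K (dd n) = bm n K.
Proof. induction K; simpl; auto. rewrite IHK. unfold dd, bm. lra. Qed.

Lemma dd_sign_pos n k : (2 * k <= S n)%nat -> 0 <= dd n k.
Proof. intros H. unfold dd, bm. destruct k. pose proof (bb_nonneg n 0); lra.
  pose proof (bb_ratio n k). pose proof (bb_nonneg n k). pose proof (bb_nonneg n (S k)).
  assert (INR (S k) <= INR n - INR k).
  { rewrite <- minus_INR by lia. apply le_INR. lia. }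
  assert (0 < INR (S k)) by (apply lt_0_INR; lia). nra. Qed.

Lemma dd_sign_neg n k : (S n <= 2 * k)%nat -> (1 <= k)%nat -> dd n k <= 0.
Proof. intros H H1. unfold dd, bm. destruct k. lia.
  pose proof (bb_ratio n k). pose proof (bb_nonneg n k). pose proof (bb_nonneg n (S k)).
  assert (INR n - INR k <= INR (S k)).
  { rewrite S_INR. assert (INR n <= 2 * INR k + 1).
    { replace (2 * INR k + 1) with (INR (2 * k + 1)) by (rewrite plus_INR, mult_INR; simpl; lra).
      apply le_INR; lia. } lra. }
  assert (0 < INR (S k)) by (apply lt_0_INR; lia). nra. Qed.

Lemma abs_sum_lo n m K : (2 * m <= S n)%nat -> (K <= S m)%nat ->
  sumk K (fun k => Rabs (dd n k)) = bm n K.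
Proof. intros Hm. induction K; intros HK; simpl; auto.
  rewrite IHK by lia. rewrite Rabs_right. unfold dd, bm; lra.
  apply Rle_ge, dd_sign_pos; lia. Qed.

Lemma abs_sum_hi n m K : (2 * m <= S n)%nat -> (n <= 2 * m)%nat -> (S m <= K)%nat ->
  sumk K (fun k => Rabs (dd n k)) = 2 * bb n m - bm n K.
Proof. intros Hm1 Hm2. induction K; intros HK. lia.
  destruct (Nat.eq_dec K m) as [->|HK'].
  - rewrite (abs_sum_lo n m (S m)); auto. simpl. lra.
  - simpl. rewrite IHK by lia. rewrite Rabs_left1. unfold dd, bm. lra.
    apply dd_sign_neg; lia. Qed.

Lemma abs_sum n m : (2 * m <= S n)%nat -> (n <= 2 * m)%nat ->
  sumk (n + 2) (fun k => Rabs (dd n k)) = 2 * bb n m.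
Proof. intros. rewrite (abs_sum_hi n m); try lia. unfold bm. replace (n+2)%nat with (S (S n)) by lia.
  rewrite (bb_big n (S n)) by lia. lra. Qed.

Lemma bm_rel t : INR (S t) * bm (2 * t) t = INR t * bb (2 * t) t.
Proof. destruct t. simpl. lra.
  unfold bm. pose proof (bb_ratio (2 * S t) t) as R.
  replace (INR (2 * S t)) with (2 * INR (S t)) in R by (rewrite mult_INR; simpl; lra).
  rewrite !S_INR in *. lra. Qed.

Lemma bb_SS n k : bb (S n) (S k) = (bb n (S k) + bb n k) / 2.
Proof. reflexivity. Qed.
Lemma bb_S n k : bb (S n) k = (bb n k + bm n k) / 2.
Proof. destruct k; reflexivity. Qed.

Lemma beta_step t : bb (2 * S t) (S t) * (2 * INR t + 2) = bb (2 * t) t * (2 * INR t + 1).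
Proof.
  replace (2 * S t)%nat with (S (S (2 * t))) by lia.
  rewrite bb_SS.
  pose proof (bb_ratio (S (2*t)) t) as R1.
  replace (INR (S (2 * t))) with (2 * INR t + 1) in R1 by (rewrite S_INR, mult_INR; simpl; lra).
  rewrite S_INR in R1.
  assert (E1 : bb (S (2 * t)) (S t) = bb (S (2 * t)) t).
  { assert (0 < INR t + 1) by (pose proof (pos_INR t); lra).
    apply Rmult_eq_reg_l with (INR t + 1); lra. }
  rewrite E1. rewrite bb_S. pose proof (bm_rel t) as R2. rewrite S_INR in R2. lra.
Qed.

Lemma beta_bound t : (bb (2 * t) t) ^ 2 * (2 * INR t + 1) <= 1.
Proof. induction t.
  - simpl. lra.
  - pose proof (beta_step t) as E. rewrite S_INR.
    set (b := bb (2 * S t) (S t)) in *. set (a := bb (2 * t) t) in *.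
    pose proof (pos_INR t).
    assert (b = a * (2 * INR t + 1) / (2 * INR t + 2)) by (field_simplify_eq; lra).
    rewrite H0. set (x := INR t) in *.
    assert (0 < 2 * x + 2) by lra.
    apply Rle_trans with (a ^ 2 * (2 * x + 1)); auto.
    replace ((a * (2 * x + 1) / (2 * x + 2)) ^ 2 * (2 * (x + 1) + 1))
      with (a ^ 2 * (2 * x + 1) * ((2 * x + 1) * (2 * x + 3) / ((2 * x + 2) * (2 * x + 2)))) by (field; lra).
    rewrite <- (Rmult_1_r (a ^ 2 * (2 * x + 1))) at 2.
    apply Rmult_le_compat_l. pose proof (pow2_ge_0 a); nra.
    apply Rmult_le_reg_r with ((2 * x + 2) * (2 * x + 2)). nra.
    unfold Rdiv. rewrite Rmult_assoc, Rinv_l by nra. nra.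
Qed.

Definition Nn n := sumk (n + 2) (fun k => Rabs (dd n k)).

Lemma Nn_nonneg n : 0 <= Nn n.
Proof. unfold Nn. apply sumk_nonneg. intros; apply Rabs_pos. Qed.

Lemma Nn_bound n : (Nn n) ^ 2 * (INR n + 1) <= 4.
Proof. unfold Nn. destruct (Nat.Even_or_Odd n) as [[t ->]|[t ->]].
  - rewrite (abs_sum _ t) by lia. pose proof (beta_bound t).
    replace (INR (2 * t)) with (2 * INR t) by (rewrite mult_INR; simpl; lra). nra.
  - rewrite (abs_sum _ (S t)) by lia. pose proof (beta_bound (S t)).
    replace (2 * t + 1)%nat with (S (2 * t)) by lia.
    assert (E : bb (S (2 * t)) (S t) = bb (2 * S t) (S t)).
    { replace (2 * S t)%nat with (S (S (2 * t))) by lia. rewrite (bb_SS (S (2 * t))).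
      pose proof (bb_ratio (S (2*t)) t) as R1.
      replace (INR (S (2 * t))) with (2 * INR t + 1) in R1 by (rewrite S_INR, mult_INR; simpl; lra).
      rewrite S_INR in R1. assert (0 < INR t + 1) by (pose proof (pos_INR t); lra).
      assert (bb (S (2 * t)) (S t) = bb (S (2 * t)) t) by (apply Rmult_eq_reg_l with (INR t + 1); lra).
      lra. }
    rewrite E. rewrite S_INR in *. replace (INR (S (2 * t))) with (2 * INR t + 1) by (rewrite S_INR, mult_INR; simpl; lra).
    pose proof (pow2_ge_0 (bb (2 * S t) (S t))). pose proof (pos_INR t). replace (INR (2 * t)) with (2 * INR t) by (rewrite mult_INR; simpl; lra). nra.
Qed.

Definition G (h : list Z) n (F : list Z -> R) x := sumk (n + 2) (fun k => dd n k * F (shn h k x)).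

Lemma G_step h n F x : (G h n F x + G h n F (vsub x h)) / 2 = G h (S n) F x.
Proof. unfold G. replace (S n + 2)%nat with (S (n + 2)) by lia.
  assert (E : sumk (S (n + 2)) (fun k => dd (S n) k * F (shn h k x)) =
     sumk (S (n + 2)) (fun k => / 2 * (dd n k * F (shn h k x)) + / 2 * (dm n k * F (shn h k x)))).
  { apply sumk_ext; intros; rewrite dd_S; lra. }
  rewrite E.
  rewrite sumk_plus, !sumk_scal. rewrite sumk_shift with (f := fun k => dm n k * F (shn h k x)).
  cbn [sumk dm]. assert (Z0 : dd n (n + 2) = 0) by (unfold dd, bm; replace (n+2)%nat with (S (S n)) by lia; rewrite !bb_big by lia; lra).
  rewrite Z0. simpl shn. lra. Qed.

Lemma G_abs d h n F x : length h = d -> length x = d -> nng d F ->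
  Rabs (G h n F x) <= sumk (n + 2) (fun k => Rabs (dd n k) * F (shn h k x)).
Proof. intros Hh Hx HF. unfold G. eapply Rle_trans. apply sumk_abs. apply sumk_le.
  intros k _. rewrite Rabs_mult. rewrite (Rabs_right (F _)). lra.
  apply Rle_ge, HF. apply len_shn; auto. Qed.

Lemma G_summ d h n F : length h = d -> summ d F -> summ d (fun x => Rabs (G h n F x)).
Proof. intros Hh HF.
  destruct (summ_sumk d (n + 2) (fun k => Rabs (dd n k)) (fun k x => F (shn h k x))) as [S _].
  { intros k _. split. apply Rabs_pos. apply summ_shn; auto. }
  apply summ_le with (2 := fun x Hx => G_abs d h n F x Hh Hx (proj1 HF)); auto.
  intros x _; apply Rabs_pos. Qed.

Lemma G_le_Nn d h n F x : length h = d -> length x = d -> nng d F ->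
  (forall z, inZd d z -> F z <= 1) -> Rabs (G h n F x) <= Nn n.
Proof. intros Hh Hx HF H1. eapply Rle_trans. apply (G_abs d); auto. unfold Nn. apply sumk_le.
  intros k _. assert (inZd d (shn h k x)) by (apply len_shn; auto).
  pose proof (H1 _ H). pose proof (HF _ H). pose proof (Rabs_pos (dd n k)). nra. Qed.

Definition V d h n F := nnS d (fun x => Rabs (G h n F x)).

Definition sig (h : list Z) (p : list Z -> R) y := Rmin (p y) (p (vadd y h)).
Definition rr (h : list Z) (p : list Z -> R) y := p y - sig h p y / 2 - sig h p (vsub y h) / 2.
Definition aa d h p := 1 - dTV d p (law_shift p h).

Lemma pmf_summ d p : is_pmf d p -> summ d p /\ nnS d p = 1.
Proof. intros [H1 H2]. assert (summ d p).
  { split. intros x _; auto. exists 1. intros l L1 L2. apply (proj1 H2). exists l; auto. }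
  split; auto. apply nnS_eq; auto. Qed.

Lemma decomp d h p : length h = d -> is_pmf d p ->
  summ d (sig h p) /\ summ d (rr h p) /\ nnS d (sig h p) = aa d h p /\ nnS d (rr h p) = 1 - aa d h p
  /\ 0 <= aa d h p <= 1.
Proof. intros Hh Hp. destruct (pmf_summ d p Hp) as [Sp Ep].
  assert (Hp0 : forall x, 0 <= p x) by apply Hp.
  destruct (summ_sh d h p Hh Sp) as [Sps Eps].
  set (m := fun x => Rmin (p (vsub x h)) (p x)).
  assert (Sm : summ d m).
  { apply summ_le with (g := p); auto. intros x _; unfold m, Rmin; destruct Rle_dec; auto.
    intros x _; apply Rmin_r. }
  assert (Ssig : summ d (sig h p) /\ nnS d (sig h p) = nnS d m).
  { destruct (summ_ad d h m Hh Sm) as [S1 E1]. rewrite <- E1. apply summ_ext; auto.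
    intros y Hy. unfold m, sig. rewrite (vsub_vadd d); auto. }
  destruct Ssig as [Ssig Esig].
  set (D := fun x => Rabs (p x - p (vsub x h))).
  destruct (summ_plus d p _ (fun x => p x + p (vsub x h)) Sp Sps) as [Spp Epp]. intros; auto.
  assert (SD : summ d D).
  { apply summ_le with (g := fun x => p x + p (vsub x h)); auto.
    intros x _; apply Rabs_pos.
    intros x _. unfold D. pose proof (Hp0 x); pose proof (Hp0 (vsub x h)).
    unfold Rabs; destruct Rcase_abs; lra. }
  assert (ED : dTV d p (law_shift p h) = nnS d D / 2) by (apply dTV_eq; auto).
  destruct (summ_scal d (/2) D (fun x => / 2 * D x)) as [SD2 ED2]; auto. lra.
  destruct (summ_plus d m _ (fun x => m x + / 2 * D x) Sm SD2) as [_ E3]. intros; auto.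
  destruct (summ_scal d (/2) (fun x => p x + p (vsub x h)) (fun x => m x + / 2 * D x)) as [_ E4]; auto. lra.
  { intros x _. unfold m, D, Rmin. destruct Rle_dec; unfold Rabs; destruct Rcase_abs; lra. }
  assert (Ea : nnS d m = aa d h p).
  { unfold aa. rewrite ED. rewrite E3, ED2, Epp, Ep, Eps, Ep in E4. lra. }
  assert (Sr : summ d (rr h p)).
  { apply summ_le with (g := p); auto.
    - intros y Hy. unfold rr, sig.
      assert (Rmin (p y) (p (vadd y h)) <= p y) by apply Rmin_l.
      assert (Rmin (p (vsub y h)) (p (vadd (vsub y h) h)) <= p y).
      { rewrite (vadd_vsub d); auto. apply Rmin_r. }
      lra.
    - intros y _. unfold rr, sig. pose proof (Rmin_l (p (vsub y h)) (p (vadd (vsub y h) h))).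
      pose proof (Rmin_glb (p y) (p (vadd y h)) 0); pose proof (Hp0 y); pose proof (Hp0 (vadd y h)).
      pose proof (Rmin_glb (p (vsub y h)) (p (vadd (vsub y h) h)) 0); pose proof (Hp0 (vsub y h)); pose proof (Hp0 (vadd (vsub y h) h)).
      unfold Rmin in *. repeat destruct Rle_dec; lra. }
  destruct (summ_sh d h (sig h p) Hh Ssig) as [Ssh Esh].
  destruct (summ_scal d (/2) (sig h p) (fun y => / 2 * sig h p y)) as [S5 E5]; auto. lra.
  destruct (summ_scal d (/2) (fun y => sig h p (vsub y h)) (fun y => / 2 * sig h p (vsub y h))) as [S6 E6]; auto. lra.
  destruct (summ_plus d _ _ (fun y => rr h p y + / 2 * sig h p y) Sr S5) as [S7 E7]. intros; auto.
  destruct (summ_plus d _ _ p S7 S6) as [_ E8].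
  { intros y _. unfold rr. lra. }
  rewrite Ep, E7, E5, E6, Esh in E8.
  assert (0 <= nnS d m) by (apply nnS_nonneg; auto).
  assert (0 <= nnS d D) by (apply nnS_nonneg; auto).
  unfold aa in *. split; [auto|split; [auto|split;[lra|split;[lra|split; lra]]]].
Qed.

Definition Af h p (mu : list Z -> R) z y := rr h p y * mu (vsub z y).
Definition Bf h p (mu : list Z -> R) z y := sig h p y * ((mu (vsub z y) + mu (vsub (vsub z h) y)) / 2).

Lemma conv_split d h p mu z : length h = d -> is_pmf d p -> summ d mu ->
  (forall w, inZd d w -> mu w <= 1) -> inZd d z ->
  summ d (Af h p mu z) /\ summ d (Bf h p mu z) /\
  conv d p mu z = nnS d (Af h p mu z) + nnS d (Bf h p mu z).
Proof. intros Hh Hp Hmu H1 Hz.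
  destruct (decomp d h p Hh Hp) as [Ssig [Sr _]].
  destruct (pmf_summ d p Hp) as [Sp _].
  assert (Hp0 : forall x, 0 <= p x) by apply Hp.
  assert (Zs : forall y, inZd d y -> inZd d (vsub z y)) by (intros; apply len_vsub; auto).
  assert (Zs2 : forall y, inZd d y -> inZd d (vsub (vsub z h) y)) by (intros; repeat apply len_vsub; auto).
  assert (Hm0 : forall w, inZd d w -> 0 <= mu w) by apply Hmu.
  assert (Hsig0 : forall y, inZd d y -> 0 <= sig h p y) by (intros; apply Ssig; auto).
  assert (Hr0 : forall y, inZd d y -> 0 <= rr h p y) by (intros; apply Sr; auto).
  assert (SA : summ d (Af h p mu z)).
  { apply summ_le with (g := rr h p); auto. intros y Hy; unfold Af.
    pose proof (Hr0 y Hy); pose proof (Hm0 _ (Zs y Hy)); nra.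
    intros y Hy; unfold Af. pose proof (Hr0 y Hy); pose proof (Hm0 _ (Zs y Hy)); pose proof (H1 _ (Zs y Hy)); nra. }
  assert (SB : summ d (Bf h p mu z)).
  { apply summ_le with (g := sig h p); auto. intros y Hy; unfold Bf.
    pose proof (Hsig0 y Hy); pose proof (Hm0 _ (Zs y Hy)); pose proof (Hm0 _ (Zs2 y Hy)); nra.
    intros y Hy; unfold Bf. pose proof (Hsig0 y Hy); pose proof (Hm0 _ (Zs y Hy)); pose proof (Hm0 _ (Zs2 y Hy));
    pose proof (H1 _ (Zs y Hy)); pose proof (H1 _ (Zs2 y Hy)); nra. }
  split; auto. split; auto.
  set (f1 := fun y => sig h p y * mu (vsub z y) / 2).
  set (f2 := fun y => sig h p (vsub y h) * mu (vsub z y) / 2).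
  set (f3 := fun y => sig h p y * mu (vsub (vsub z h) y) / 2).
  assert (S1 : summ d f1).
  { apply summ_le with (g := sig h p); auto. intros y Hy; unfold f1.
    pose proof (Hsig0 y Hy); pose proof (Hm0 _ (Zs y Hy)); nra.
    intros y Hy; unfold f1. pose proof (Hsig0 y Hy); pose proof (Hm0 _ (Zs y Hy)); pose proof (H1 _ (Zs y Hy)); nra. }
  assert (Hsh0 : forall y, inZd d y -> 0 <= sig h p (vsub y h)) by (intros; apply Hsig0; apply len_vsub; auto).
  assert (S2 : summ d f2).
  { apply summ_le with (g := p); auto. intros y Hy; unfold f2.
    pose proof (Hsh0 y Hy); pose proof (Hm0 _ (Zs y Hy)); nra.
    intros y Hy; unfold f2. pose proof (Hsh0 y Hy); pose proof (Hm0 _ (Zs y Hy)); pose proof (H1 _ (Zs y Hy)).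
    assert (sig h p (vsub y h) <= p y).
    { unfold sig. rewrite (vadd_vsub d); auto. apply Rmin_r. }
    nra. }
  assert (E23 : summ d f3 /\ nnS d f3 = nnS d f2).
  { destruct (summ_ad d h f2 Hh S2) as [S E]. rewrite <- E. apply summ_ext; auto.
    intros w Hw. unfold f2, f3. rewrite (vsub_vadd d), (vsub_vadd2 d); auto. }
  destruct E23 as [S3 E3].
  destruct (summ_plus d f1 f3 (Bf h p mu z) S1 S3) as [_ EB]. intros; unfold Bf, f1, f3; lra.
  destruct (summ_plus d _ _ (fun y => Af h p mu z y + f1 y) SA S1) as [S4 E4]. intros; auto.
  destruct (summ_plus d _ _ (fun y => p y * mu (vsub z y)) S4 S2) as [_ E5].
  { intros y Hy. unfold Af, f1, f2, rr. lra. }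
  change (conv d p mu z) with (nnS d (fun y => p y * mu (vsub z y))).
  rewrite E5, E4, EB, E3. lra.
Qed.

Lemma MP d h p mu n x : length h = d -> is_pmf d p -> summ d mu ->
  (forall w, inZd d w -> mu w <= 1) -> inZd d x ->
  summ d (fun y => rr h p y * Rabs (G h n mu (vsub x y))) /\
  summ d (fun y => sig h p y * Rabs (G h (S n) mu (vsub x y))) /\
  Rabs (G h n (conv d p mu) x) <=
    nnS d (fun y => rr h p y * Rabs (G h n mu (vsub x y))) +
    nnS d (fun y => sig h p y * Rabs (G h (S n) mu (vsub x y))).
Proof. intros Hh Hp Hmu H1 Hx.
  destruct (decomp d h p Hh Hp) as [Ssig [Sr _]].
  assert (Zk : forall k, inZd d (shn h k x)) by (intros; apply len_shn; auto).
  assert (EG : G h n (conv d p mu) x =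
     sumk (n + 2) (fun k => dd n k * nnS d (Af h p mu (shn h k x))) +
     sumk (n + 2) (fun k => dd n k * nnS d (Bf h p mu (shn h k x)))).
  { unfold G. rewrite <- sumk_plus. apply sumk_ext. intros k _.
    destruct (conv_split d h p mu (shn h k x) Hh Hp Hmu H1 (Zk k)) as [_ [_ E]]. rewrite E. ring. }
  destruct (linabs d (n + 2) (dd n) (fun k => Af h p mu (shn h k x))) as [SA LA].
  { intros k _. apply (conv_split d h p mu (shn h k x) Hh Hp Hmu H1 (Zk k)). }
  destruct (linabs d (n + 2) (dd n) (fun k => Bf h p mu (shn h k x))) as [SB LB].
  { intros k _. apply (conv_split d h p mu (shn h k x) Hh Hp Hmu H1 (Zk k)). }
  destruct (summ_ext d (fun y => Rabs (sumk (n + 2) (fun k => dd n k * Af h p mu (shn h k x) y))) (fun y => rr h p y * Rabs (G h n mu (vsub x y))) ) with (2 := SA) as [SA' EA'].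
  { intros y Hy. symmetry. unfold Af, G.
    rewrite (sumk_ext _ _ (fun k => rr h p y * (dd n k * mu (shn h k (vsub x y))))).
    rewrite sumk_scal, Rabs_mult, (Rabs_right (rr h p y)); auto. apply Rle_ge, Sr; auto.
    intros k _. rewrite (vsub_shn d); auto. ring. }
  destruct (summ_ext d (fun y => Rabs (sumk (n + 2) (fun k => dd n k * Bf h p mu (shn h k x) y))) (fun y => sig h p y * Rabs (G h (S n) mu (vsub x y))) ) with (2 := SB) as [SB' EB'].
  { intros y Hy. symmetry. unfold Bf. rewrite <- G_step. unfold G.
    rewrite (sumk_ext _ _ (fun k => sig h p y * (/2 * (dd n k * mu (shn h k (vsub x y))) + /2 * (dd n k * mu (shn h k (vsub (vsub x y) h)))))).
    rewrite sumk_scal, sumk_plus, !sumk_scal, Rabs_mult, (Rabs_right (sig h p y)).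
    f_equal. f_equal. lra. apply Rle_ge, Ssig; auto.
    intros k _. rewrite (vsub_shn d); auto.
    rewrite (vsub_comm d (shn h k x) h y), (vsub_shn d h k x y), (vsub_shn d h k (vsub x y) h); auto.
    field. apply len_vsub; auto. apply len_shn; auto. }
  split; auto. split; auto. rewrite EG, EA', EB'.
  eapply Rle_trans. apply Rabs_triang. lra.
Qed.

Lemma mu_le1 d mu : summ d mu -> nnS d mu <= 1 -> forall w, inZd d w -> mu w <= 1.
Proof. intros Hs H w Hw. replace (mu w) with (fsum mu (w :: nil)) by (unfold fsum; simpl; ring).
  eapply Rle_trans; [|exact H]. apply nnS_ge; auto. constructor; auto. constructor. Qed.

Lemma conv_good d p mu : is_pmf d p -> summ d mu -> nnS d mu <= 1 ->
  summ d (conv d p mu) /\ nnS d (conv d p mu) <= 1.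
Proof. intros Hp Hmu H1.
  destruct (pmf_summ d p Hp) as [Sp Ep].
  assert (Hp0 : forall x, 0 <= p x) by apply Hp.
  assert (Fy : forall y, inZd d y -> summ d (fun x => p y * mu (vsub x y)) /\
                  nnS d (fun x => p y * mu (vsub x y)) = p y * nnS d mu).
  { intros y Hy. destruct (summ_sh d y mu Hy Hmu) as [S E]. rewrite <- E.
    apply summ_scal; auto. }
  destruct (summ_scal d (nnS d mu) p (fun y => nnS d (fun x => p y * mu (vsub x y)))) as [ST ET]; auto.
  apply nnS_nonneg; auto. intros y Hy. rewrite (proj2 (Fy y Hy)). ring.
  destruct (fubini d (fun x y => p y * mu (vsub x y))) as [SC LC]; auto.
  { intros x y Hx Hy. pose proof (Hp0 y). pose proof (proj1 Hmu (vsub x y) ltac:(apply len_vsub; auto)). nra. }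
  { intros y Hy; apply Fy; auto. }
  split. exact SC. change (nnS d (fun x => nnS d (fun y => p y * mu (vsub x y))) <= 1).
  rewrite ET, Ep in LC. lra.
Qed.

Lemma VR d h p mu n : length h = d -> is_pmf d p -> summ d mu -> nnS d mu <= 1 ->
  V d h n (conv d p mu) <= (1 - aa d h p) * V d h n mu + aa d h p * V d h (S n) mu.
Proof. intros Hh Hp Hmu H1.
  pose proof (mu_le1 d mu Hmu H1) as Hle.
  destruct (decomp d h p Hh Hp) as [Ssig [Sr [Esig [Er _]]]].
  assert (GS : forall m, summ d (fun x => Rabs (G h m mu x))) by (intros; apply G_summ; auto).
  assert (F1 : forall m (c : list Z -> R), summ d c ->
     summ d (fun x => nnS d (fun y => c y * Rabs (G h m mu (vsub x y)))) /\
     nnS d (fun x => nnS d (fun y => c y * Rabs (G h m mu (vsub x y)))) <= V d h m mu * nnS d c).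
  { intros m c Sc.
    assert (Fy : forall y, inZd d y -> summ d (fun x => c y * Rabs (G h m mu (vsub x y))) /\
                  nnS d (fun x => c y * Rabs (G h m mu (vsub x y))) = c y * V d h m mu).
    { intros y Hy. destruct (summ_sh d y _ Hy (GS m)) as [S E]. unfold V. rewrite <- E.
      apply summ_scal; auto. apply Sc; auto. }
    destruct (summ_scal d (V d h m mu) c (fun y => nnS d (fun x => c y * Rabs (G h m mu (vsub x y))))) as [ST ET]; auto.
    apply nnS_nonneg; auto. intros y Hy. rewrite (proj2 (Fy y Hy)). ring.
    destruct (fubini d (fun x y => c y * Rabs (G h m mu (vsub x y)))) as [SC LC]; auto.
    { intros x y Hx Hy. pose proof (proj1 Sc y Hy). pose proof (Rabs_pos (G h m mu (vsub x y))). nra. }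
    { intros y Hy; apply Fy; auto. }
    split; auto. rewrite ET in LC. lra. }
  destruct (F1 n (rr h p) Sr) as [S1 L1]. destruct (F1 (S n) (sig h p) Ssig) as [S2 L2].
  destruct (summ_plus d _ _ (fun x => nnS d (fun y => rr h p y * Rabs (G h n mu (vsub x y))) +
        nnS d (fun y => sig h p y * Rabs (G h (S n) mu (vsub x y)))) S1 S2) as [S3 E3]. intros; auto.
  assert (Hle2 : forall x, inZd d x -> Rabs (G h n (conv d p mu) x) <= nnS d (fun y => rr h p y * Rabs (G h n mu (vsub x y))) +
        nnS d (fun y => sig h p y * Rabs (G h (S n) mu (vsub x y)))).
  { intros x Hx. apply (MP d h p mu n x); auto. }
  destruct (summ_le d (fun x => Rabs (G h n (conv d p mu) x)) _ ltac:(intros x _; apply Rabs_pos) Hle2 S3) as [_ L].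
  unfold V at 1. rewrite E3, Er, Esig in *. lra.
Qed.

Lemma fold_min_le (f : nat -> R) base l j : In j l ->
  fold_right (fun j a => Rmin (f j) a) base l <= f j.
Proof. induction l; simpl; intros H; [contradiction|]. destruct H as [->|H].
  apply Rmin_l. eapply Rle_trans; [apply Rmin_r|auto]. Qed.
Lemma fold_min_base (f : nat -> R) base l : fold_right (fun j a => Rmin (f j) a) base l <= base.
Proof. induction l; simpl; [lra|]. eapply Rle_trans; [apply Rmin_r|auto]. Qed.
Lemma fold_min_ge (f : nat -> R) base l c : (forall j, In j l -> c <= f j) -> c <= base ->
  c <= fold_right (fun j a => Rmin (f j) a) base l.
Proof. induction l; simpl; intros H Hb; auto. apply Rmin_glb; auto. Qed.

Lemma u_coef_props d p j : (1 <= d)%nat -> (j < d)%nat -> is_pmf d p ->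
  0 <= u_coef d p /\ u_coef d p <= aa d (evec d j) p.
Proof. intros Hd Hj Hp. unfold u_coef, min_coord. split.
  - apply fold_min_ge.
    + intros i Hi. apply in_seq in Hi. destruct (decomp d (evec d i) p (len_evec d i) Hp) as [_ [_ [_ [_ H]]]].
      unfold aa in H. lra.
    + destruct (decomp d (evec d 0) p (len_evec d 0) Hp) as [_ [_ [_ [_ H]]]]. unfold aa in H. lra.
  - unfold aa. destruct j.
    + apply fold_min_base.
    + apply (fold_min_le (fun j => 1 - dTV d p (law_shift p (evec d j)))). apply in_seq. lia.
Qed.

Lemma alg A B a u x W : 0 <= A -> 0 <= B -> 0 <= a <= 1 -> 0 <= u <= a -> 1 <= x ->
  A ^ 2 * x <= 4 -> B ^ 2 * (x + 1) <= 4 -> 0 <= W <= (1 - a) * A + a * B ->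
  W ^ 2 * (x + u / 2) <= 4.
Proof. intros HA HB Ha Hu Hx H1 H2 HW.
  set (P := (1 - a) * A ^ 2 + a * B ^ 2).
  assert (S1 : W ^ 2 <= P).
  { assert (W ^ 2 <= ((1 - a) * A + a * B) ^ 2) by nra.
    assert (E : P - ((1 - a) * A + a * B) ^ 2 = (a * (1 - a)) * (A - B) ^ 2) by (unfold P; ring).
    assert (0 <= (a * (1 - a)) * (A - B) ^ 2) by (apply Rmult_le_pos; [nra|apply pow2_ge_0]). lra. }
  assert (S2 : P * (x * (x + 1)) <= 4 * ((1 - a) * (x + 1) + a * x)).
  { unfold P. assert (0 <= (1 - a) * (x + 1)) by nra. assert (0 <= a * x) by nra. nra. }
  assert (S3 : 4 * ((1 - a) * (x + 1) + a * x) * (x + a / 2) <= 4 * (x * (x + 1))) by nra.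
  assert (S4 : P * (x + a / 2) <= 4).
  { assert (0 < x * (x + 1)) by nra. assert (0 <= P) by (unfold P; nra).
    apply Rmult_le_reg_r with (x * (x + 1)); auto. nra. }
  assert (0 <= W ^ 2) by nra. nra.
Qed.

Lemma V_delta0 d h n : length h = d -> V d h n (delta0 d) <= Nn n.
Proof. intros Hh. destruct (summ_delta0 d) as [S0 E0].
  destruct (summ_sumk d (n + 2) (fun k => Rabs (dd n k)) (fun k x => delta0 d (shn h k x))) as [S1 E1].
  { intros k _. split. apply Rabs_pos. apply summ_shn; auto. }
  assert (Hle : forall x, inZd d x -> Rabs (G h n (delta0 d) x) <= sumk (n + 2) (fun k => Rabs (dd n k) * delta0 d (shn h k x))).
  { intros x Hx. apply (G_abs d); auto. apply S0. }
  destruct (summ_le d _ _ ltac:(intros x _; apply Rabs_pos) Hle S1) as [_ L].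
  unfold V. rewrite E1 in L. eapply Rle_trans; [exact L|]. unfold Nn. apply sumk_le.
  intros k _. rewrite (proj2 (summ_shn d h k (delta0 d) Hh S0)). pose proof (Rabs_pos (dd n k)). nra.
Qed.

Lemma main d j ps : (1 <= d)%nat -> (j < d)%nat -> (forall p, In p ps -> is_pmf d p) ->
  summ d (sum_law d ps) /\ nnS d (sum_law d ps) <= 1 /\ 0 <= s_coef d ps /\
  forall n, (V d (evec d j) n (sum_law d ps)) ^ 2 * (INR n + 1 + s_coef d ps / 2) <= 4.
Proof. intros Hd Hj. pose proof (len_evec d j) as Hh. set (h := evec d j) in *.
  induction ps as [|p ps IH]; intros Hps.
  - simpl. destruct (summ_delta0 d) as [S0 E0]. split; auto. split; auto. split. lra.
    intros n. pose proof (V_delta0 d h n Hh). pose proof (Nn_bound n).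
    assert (0 <= V d h n (delta0 d)) by (apply nnS_nonneg, G_summ; auto).
    pose proof (Nn_nonneg n). pose proof (pos_INR n).
    assert (V d h n (delta0 d) ^ 2 <= Nn n ^ 2) by (apply pow_incr; lra).
    replace (INR n + 1 + 0 / 2) with (INR n + 1) by field. nra.
  - destruct IH as [Sm [Em [Hs IHn]]]. intros; apply Hps; simpl; auto.
    assert (Hp : is_pmf d p) by (apply Hps; simpl; auto).
    change (sum_law d (p :: ps)) with (conv d p (sum_law d ps)).
    change (s_coef d (p :: ps)) with (u_coef d p + s_coef d ps).
    destruct (conv_good d p _ Hp Sm Em) as [Sc Ec].
    destruct (u_coef_props d p j Hd Hj Hp) as [Hu1 Hu2].
    destruct (decomp d h p Hh Hp) as [_ [_ [_ [_ Ha]]]].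
    split; auto. split; auto. split. lra.
    intros n. pose proof (VR d h p _ n Hh Hp Sm Em) as HV.
    pose proof (IHn n) as I1. pose proof (IHn (S n)) as I2. rewrite S_INR in I2.
    assert (0 <= V d h n (conv d p (sum_law d ps))) by (apply nnS_nonneg, G_summ; auto).
    assert (0 <= V d h n (sum_law d ps)) by (apply nnS_nonneg, G_summ; auto).
    assert (0 <= V d h (S n) (sum_law d ps)) by (apply nnS_nonneg, G_summ; auto).
    pose proof (pos_INR n).
    replace (INR n + 1 + (u_coef d p + s_coef d ps) / 2) with ((INR n + 1 + s_coef d ps / 2) + u_coef d p / 2) by field.
    apply (alg (V d h n (sum_law d ps)) (V d h (S n) (sum_law d ps)) (aa d h p)); auto; try lra.
Qed.

Theorem lemma4p1 :
  exists C : R,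
    forall (d : nat) (ps : list (list Z -> R)),
      (1 <= d)%nat ->
      (forall p, In p ps -> is_pmf d p) ->
      0 < s_coef d ps ->
      forall j : nat, (j < d)%nat ->
        dTV d (sum_law d ps) (law_shift (sum_law d ps) (evec d j))
          <= C / sqrt (s_coef d ps).
Proof.
  exists 2. intros d ps Hd Hps Hs j Hj.
  destruct (main d j ps Hd Hj Hps) as [Sm [Em [_ HV]]].
  pose proof (HV 0%nat) as H0. simpl INR in H0.
  set (mu := sum_law d ps) in *. set (h := evec d j) in *.
  pose proof (len_evec d j) as Hh. fold h in Hh.
  assert (GS := G_summ d h 0 mu Hh Sm).
  destruct (summ_ext d (fun x => Rabs (G h 0 mu x)) (fun x => Rabs (mu x - law_shift mu h x))) as [S1 E1]; auto.
  { intros x _. unfold G, law_shift, dd, bm. simpl. f_equal. ring. }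
  rewrite (dTV_eq d); auto. rewrite E1. fold (V d h 0 mu).
  set (v := V d h 0 mu) in *.
  assert (0 <= v) by (apply nnS_nonneg; auto).
  assert (Q : 0 < sqrt (s_coef d ps)) by (apply sqrt_lt_R0; auto).
  pose proof (sqrt_sqrt (s_coef d ps) ltac:(lra)) as Esq.
  set (q := sqrt (s_coef d ps)) in *.
  assert (v * q <= 4).
  { assert ((v * q) ^ 2 <= 16).
    { replace ((v * q) ^ 2) with (v ^ 2 * (q * q)) by ring. rewrite Esq. nra. }
    assert (0 <= v * q) by nra. nra. }
  apply Rmult_le_reg_r with q; auto.
  replace (2 / q * q) with 2 by (field; lra). lra.
Qed.
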